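(* Let $p\ge 1$, $n_1,\dots,n_p\ge 1$, $n=n_1+\dots+n_p$, and let $A\in\mathcal{B}'(p)$ (defined in the context), with diagonal blocks $A_{k,k}$ ($k=1,\dots,p$). Then: (1) $A\succeq 0$ if and only if $\phi(A)\succeq 0$ and $A_{k,k}\succeq 0$ for every $k\in\{1,\dots,p\}$. (2) $A\succ 0$ if and only if $\phi(A)\succ 0$ and $A_{k,k}\succ 0$ for every $k\in\{1,\dots,p\}$.
   Context: All matrices are real. $M\succeq 0$ means $M$ is symmetric positive semidefinite, $M\succ 0$ means symmetric positive definite. $J_{m}$ is the $m\times m$ matrix of ones and $J_{m,q}=\mathbf 1_m\mathbf 1_q^\top$ the $m\times q$ matrix of ones. For a square matrix $C$ of size $m$, $\overline{C}=m^{-2}\mathbf 1_m^\top C\mathbf 1_m$ denotes the average of its entries. Given block sizes $n_1,\dots,n_p$, index the rows/columns of an $n\times n$ matrix ($n=\sum n_k$) by groups $G_1,\dots,G_p$, where $G_1$ consists of the first $n_1$ indices, $G_2$ the next $n_2$, etc., and write the matrix in block form $A=(A_{k,\ell})_{1\le k,\ell\le p}$ with $A_{k,\ell}$ of size $n_k\times n_\ell$. $\mathcal{B}'(p)$ is the set of real symmetric $n\times n$ block matrices $A$ such that every off-diagonal block is constant, i.e. $A_{k,\ell}=c_{k,\ell}J_{n_k,n_\ell}$ for some real $c_{k,\ell}$ ($k\neq\ell$), and every diagonal block satisfies $A_{k,k}-\overline{A_{k,k}}\,J_{n_k}\succeq 0$. The block average map $\phi$ sends $A$ to the $p\times p$ matrix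 $[\phi(A)]_{k,\ell}=\frac{1}{n_kn_\ell}\sum_{i\in G_k,\,j\in G_\ell}A_{i,j}$. *)

(* Defs.v *)
From HB Require Import structures.
From mathcomp Require Import all_boot all_order all_algebra.
Set Implicit Arguments. Unset Strict Implicit. Unset Printing Implicit Defensive.
Import Order.TTheory GRing.Theory Num.Theory.
Local Open Scope ring_scope.

Definition psd (R : realFieldType) (m : nat) (M : 'M[R]_m) : Prop :=
  M^T = M /\ forall x : 'cV[R]_m, 0 <= (x^T *m M *m x) 0 0.

Definition pd (R : realFieldType) (m : nat) (M : 'M[R]_m) : Prop :=
  M^T = M /\ forall x : 'cV[R]_m, x != 0 -> 0 < (x^T *m M *m x) 0 0.

Definition ones (R : realFieldType) (m q : nat) : 'M[R]_(m, q) := const_mx 1.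

Definition mx_avg (R : realFieldType) (m : nat) (C : 'M[R]_m) : R :=
  (\sum_(i < m) \sum_(j < m) C i j) / (m * m)%:R.

(* The class B'(p) for block sizes nk : 'I_p -> nat; the n x n matrix is
   indexed by 'I_(\sum_k nk k), groups given by MathComp's block structure. *)
Definition inBp (R : realFieldType) (p : nat) (nk : 'I_p -> nat)
  (A : 'M[R]_(\sum_(k < p) nk k)) : Prop :=
  A^T = A /\
  (forall k l : 'I_p, k != l ->
     exists c : R, submxblock A k l = c *: ones R (nk k) (nk l)) /\
  (forall k : 'I_p,
     psd (submxblock A k k - mx_avg (submxblock A k k) *: ones R (nk k) (nk k))).

Definition blockavg (R : realFieldType) (p : nat) (nk : 'I_p -> nat)
  (A : 'M[R]_(\sum_(k < p) nk k)) : 'M[R]_p :=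
  \matrix_(k, l) ((\sum_(i < nk k) \sum_(j < nk l) submxblock A k l i j)
                   / (nk k * nk l)%:R).

(* Main.v *)
Require Import Defs.
From HB Require Import structures.
From mathcomp Require Import all_boot all_order all_algebra.
From mathcomp Require Import ring lra.
Import Order.TTheory GRing.Theory Num.Theory.
Local Open Scope ring_scope.
Set Implicit Arguments. Unset Strict Implicit.

Definition qf (R : realFieldType) a b (u : 'cV[R]_a) (M : 'M[R]_(a,b)) (v : 'cV[R]_b) : R :=
  (u^T *m M *m v) 0 0.

Lemma qfE (R : realFieldType) a b (u : 'cV[R]_a) (M : 'M[R]_(a,b)) (v : 'cV[R]_b) :
  qf u M v = \sum_i \sum_j u i 0 * M i j * v j 0.
Proof.
rewrite /qf mxE exchange_big; apply: eq_bigr => j _; rewrite mxE mulr_suml.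
by apply: eq_bigr => i _; rewrite !mxE.
Qed.

Definition csum (R : realFieldType) a (u : 'cV[R]_a) : R := \sum_i u i 0.

Lemma qf_ones (R : realFieldType) a b (u : 'cV[R]_a) (c : R) (v : 'cV[R]_b) :
  qf u (c *: ones R a b) v = c * csum u * csum v.
Proof.
rewrite qfE /csum -mulrA big_distrlr /= mulr_sumr; apply: eq_bigr => i _.
rewrite mulr_sumr; apply: eq_bigr => j _; rewrite !mxE; ring.
Qed.

Lemma qfD (R : realFieldType) a b (u : 'cV[R]_a) (M N : 'M[R]_(a,b)) (v : 'cV[R]_b) :
  qf u (M + N) v = qf u M v + qf u N v.
Proof. by rewrite /qf mulmxDr mulmxDl mxE. Qed.

Lemma qf_blocks (R : realFieldType) (p : nat) (nk : 'I_p -> nat)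
  (A : 'M[R]_(\sum_(k < p) nk k)) (x y : 'cV[R]_(\sum_(k < p) nk k)) :
  qf x A y = \sum_k \sum_l qf (submxcol x k) (submxblock A k l) (submxcol y l).
Proof.
rewrite /qf.
have eA : A = \mxblock_(k, l) submxblock A k l by rewrite submxblockK.
have ex : x = \mxcol_k submxcol x k by rewrite submxcolK.
have ey : y = \mxcol_k submxcol y k by rewrite submxcolK.
rewrite {1}eA {1}ex {1}ey tr_mxcol mul_mxrow_mxblock mul_mxrow_mxcol summxE.
rewrite exchange_big; apply: eq_bigr => l _.
by rewrite mulmx_suml summxE.
Qed.
Definition Dk (R : realFieldType) (p : nat) (nk : 'I_p -> nat)
  (A : 'M[R]_(\sum_(k < p) nk k)) (k : 'I_p) : 'M[R]_(nk k) :=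
  submxblock A k k - blockavg A k k *: ones R (nk k) (nk k).

Lemma avg_const (R : realFieldType) a b (c : R) : (0 < a)%N -> (0 < b)%N ->
  (\sum_(i < a) \sum_(j < b) (c *: ones R a b) i j) / (a * b)%:R = c.
Proof.
move=> ha hb.
under eq_bigr do under eq_bigr do rewrite !mxE mulr1.
rewrite sumr_const card_ord sumr_const card_ord -mulrnA [(b * a)%N]mulnC -[c *+ _]mulr_natr mulfK //.
by rewrite pnatr_eq0 -lt0n muln_gt0 ha hb.
Qed.

Lemma blockavg_off (R : realFieldType) (p : nat) (nk : 'I_p -> nat)
  (hnk : forall k : 'I_p, (0 < nk k)%N)
  (A : 'M[R]_(\sum_(k < p) nk k)) (hA : inBp A) (k l : 'I_p) :
  k != l -> submxblock A k l = blockavg A k l *: ones R (nk k) (nk l).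
Proof.
move=> kl; have [c hc] := (proj1 (proj2 hA)) k l kl.
by rewrite mxE hc avg_const.
Qed.

Lemma blockavg_diag (R : realFieldType) (p : nat) (nk : 'I_p -> nat)
  (A : 'M[R]_(\sum_(k < p) nk k)) (k : 'I_p) :
  blockavg A k k = mx_avg (submxblock A k k).
Proof. by rewrite mxE. Qed.

Lemma qf_Dk_ones (R : realFieldType) (p : nat) (nk : 'I_p -> nat)
  (hnk : forall k : 'I_p, (0 < nk k)%N)
  (A : 'M[R]_(\sum_(k < p) nk k)) (k : 'I_p) :
  qf (const_mx 1) (Dk A k) (const_mx 1) = 0.
Proof.
rewrite /Dk qfD -scaleNr qf_ones /csum qfE blockavg_diag /mx_avg.
have h1 : \sum_(i < nk k) (const_mx 1 : 'cV[R]_(nk k)) i 0 = (nk k)%:R.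
  by under eq_bigr do rewrite mxE; rewrite sumr_const card_ord.
have h2 : \sum_i \sum_j (const_mx 1 : 'cV[R]_(nk k)) i 0 * submxblock A k k i j
      * (const_mx 1 : 'cV[R]_(nk k)) j 0 = \sum_i \sum_j submxblock A k k i j.
  by apply: eq_bigr => i _; apply: eq_bigr => j _; rewrite !mxE mul1r mulr1.
rewrite h1 h2; set S := \sum_i _.
have hn : (nk k)%:R != 0 :> R by rewrite pnatr_eq0 -lt0n hnk.
rewrite natrM; field; exact: hn.
Qed.

Lemma qf_decomp (R : realFieldType) (p : nat) (nk : 'I_p -> nat)
  (hnk : forall k : 'I_p, (0 < nk k)%N)
  (A : 'M[R]_(\sum_(k < p) nk k)) (hA : inBp A) (x : 'cV[R]_(\sum_(k < p) nk k)) :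
  qf x A x = \sum_k qf (submxcol x k) (Dk A k) (submxcol x k)
             + qf (\col_k csum (submxcol x k)) (blockavg A) (\col_k csum (submxcol x k)).
Proof.
rewrite qf_blocks qfE -big_split; apply: eq_bigr => k _ /=.
rewrite (bigD1 k) // [in RHS](bigD1 k) //= addrA; congr (_ + _).
  have e : submxblock A k k = Dk A k + blockavg A k k *: ones R (nk k) (nk k).
    by rewrite /Dk subrK.
  by rewrite {1}e qfD qf_ones !mxE; ring.
apply: eq_big => // l kl.
by rewrite blockavg_off // 1?eq_sym // qf_ones !mxE; ring.
Qed.

Lemma qf0l (R : realFieldType) a b (M : 'M[R]_(a,b)) (v : 'cV[R]_b) : qf 0 M v = 0.
Proof. by rewrite /qf trmx0 !mul0mx mxE. Qed.

Lemma qf0r (R : realFieldType) a b (u : 'cV[R]_a) (M : 'M[R]_(a,b)) : qf u M 0 = 0.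
Proof. by rewrite /qf mulmx0 mxE. Qed.

Lemma qfZ (R : realFieldType) a b (c d : R) (u : 'cV[R]_a) (M : 'M[R]_(a,b)) (v : 'cV[R]_b) :
  qf (c *: u) M (d *: v) = c * d * qf u M v.
Proof.
rewrite !qfE mulr_sumr; apply: eq_bigr => i _; rewrite mulr_sumr.
by apply: eq_bigr => j _; rewrite !mxE; ring.
Qed.

Lemma blk_sym (R : realFieldType) (p : nat) (nk : 'I_p -> nat)
  (A : 'M[R]_(\sum_(k < p) nk k)) k : A^T = A -> (submxblock A k k)^T = submxblock A k k.
Proof. by move=> h; rewrite tr_submxblock h. Qed.

Lemma avg_sym (R : realFieldType) (p : nat) (nk : 'I_p -> nat)
  (A : 'M[R]_(\sum_(k < p) nk k)) : A^T = A -> (blockavg A)^T = blockavg A.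
Proof.
move=> h; apply/matrixP => k l; rewrite !mxE mulnC; congr (_ / _).
rewrite exchange_big; apply: eq_bigr => i _; apply: eq_bigr => j _.
by rewrite -{1}h -tr_submxblock mxE.
Qed.

Definition emb (R : realFieldType) (p : nat) (nk : 'I_p -> nat) (k : 'I_p)
  (y : 'cV[R]_(nk k)) : 'cV[R]_(\sum_(k < p) nk k) :=
  \mxcol_l (if l == k then conform_mx (0 : 'cV[R]_(nk l)) y else 0).

Lemma emb_col (R : realFieldType) (p : nat) (nk : 'I_p -> nat) (k : 'I_p)
  (y : 'cV[R]_(nk k)) l :
  submxcol (emb y) l = if l == k then conform_mx (0 : 'cV[R]_(nk l)) y else 0.
Proof. by rewrite /emb mxcolK. Qed.

Lemma emb_colk (R : realFieldType) (p : nat) (nk : 'I_p -> nat) (k : 'I_p)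
  (y : 'cV[R]_(nk k)) : submxcol (emb y) k = y.
Proof. by rewrite emb_col eqxx conform_mx_id. Qed.

Lemma qf_emb (R : realFieldType) (p : nat) (nk : 'I_p -> nat)
  (A : 'M[R]_(\sum_(k < p) nk k)) (k : 'I_p) (y : 'cV[R]_(nk k)) :
  qf (emb y) A (emb y) = qf y (submxblock A k k) y.
Proof.
rewrite qf_blocks (bigD1 k) //= [X in _ + X]big1 ?addr0; last first.
  by move=> i ik; apply: big1 => j _; rewrite emb_col (negbTE ik) qf0l.
rewrite (bigD1 k) //= [X in _ + X]big1 ?addr0 ?emb_colk //.
by move=> j jk; rewrite emb_col (negbTE jk) qf0r.
Qed.

Definition vt (R : realFieldType) (p : nat) (nk : 'I_p -> nat) (t : 'cV[R]_p)
  : 'cV[R]_(\sum_(k < p) nk k) :=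
  \mxcol_k ((t k 0 / (nk k)%:R) *: (const_mx 1 : 'cV[R]_(nk k))).

Lemma csum_vt (R : realFieldType) (p : nat) (nk : 'I_p -> nat)
  (hnk : forall k : 'I_p, (0 < nk k)%N) (t : 'cV[R]_p) k :
  csum (submxcol (vt nk t) k) = t k 0.
Proof.
rewrite /vt mxcolK /csum.
under eq_bigr do rewrite !mxE mulr1.
rewrite sumr_const card_ord -[X in X = _]mulr_natr mulfVK //.
by rewrite pnatr_eq0 -lt0n hnk.
Qed.

Lemma qf_vt (R : realFieldType) (p : nat) (nk : 'I_p -> nat)
  (hnk : forall k : 'I_p, (0 < nk k)%N)
  (A : 'M[R]_(\sum_(k < p) nk k)) (hA : inBp A) (t : 'cV[R]_p) :
  qf (vt nk t) A (vt nk t) = qf t (blockavg A) t.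
Proof.
rewrite qf_decomp // big1 ?add0r.
  by congr qf; apply/matrixP => k i; rewrite !mxE csum_vt // ord1.
by move=> k _; rewrite /vt mxcolK qfZ qf_Dk_ones // mulr0.
Qed.

Lemma vt_neq0 (R : realFieldType) (p : nat) (nk : 'I_p -> nat)
  (hnk : forall k : 'I_p, (0 < nk k)%N) (t : 'cV[R]_p) :
  t != 0 -> vt nk t != 0.
Proof.
apply: contra => /eqP h; apply/eqP/matrixP => k i.
by rewrite ord1 -(csum_vt hnk) h mxE /csum big1 // => j _; rewrite !mxE.
Qed.

Lemma Dk_psd (R : realFieldType) (p : nat) (nk : 'I_p -> nat)
  (A : 'M[R]_(\sum_(k < p) nk k)) (hA : inBp A) k (y : 'cV[R]_(nk k)) :
  0 <= qf y (Dk A k) y.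
Proof. by rewrite /Dk blockavg_diag; apply: (proj2 (proj2 (proj2 hA) k)). Qed.

Lemma qf_Dk (R : realFieldType) (p : nat) (nk : 'I_p -> nat)
  (A : 'M[R]_(\sum_(k < p) nk k)) k (y : 'cV[R]_(nk k)) :
  qf y (Dk A k) y = qf y (submxblock A k k) y - blockavg A k k * csum y * csum y.
Proof. by rewrite /Dk qfD -scaleNr qf_ones !mulNr. Qed.

Unset Implicit Arguments.
Set Strict Implicit.

Theorem theorem1 (R : realFieldType) (p : nat) (nk : 'I_p -> nat)
  (hp : (0 < p)%N) (hnk : forall k : 'I_p, (0 < nk k)%N)
  (A : 'M[R]_(\sum_(k < p) nk k)) (hA : inBp A) :
  (psd A <-> psd (blockavg A) /\ (forall k : 'I_p, psd (submxblock A k k))) /\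
  (pd A <-> pd (blockavg A) /\ (forall k : 'I_p, pd (submxblock A k k))).
Proof.
have hs := proj1 hA.
split; split.
- move=> [_ hpsd]; split; first split.
  + exact: avg_sym.
  + by move=> t; have := hpsd (vt nk t); rewrite -/(qf _ _ _) qf_vt.
  + move=> k; split; first exact: blk_sym.
    by move=> y; have := hpsd (emb y); rewrite -/(qf _ _ _) qf_emb.
- move=> [[_ hphi] _]; split => // x; rewrite -/(qf _ _ _) qf_decomp //.
  apply: addr_ge0; last exact: hphi.
  by apply: sumr_ge0 => k _; apply: Dk_psd.
- move=> [_ hpd]; split; first split.
  + exact: avg_sym.
  + move=> t t0; have := hpd (vt nk t) (vt_neq0 hnk t0).
    by rewrite -/(qf _ _ _) qf_vt.
  + move=> k; split; first exact: blk_sym.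
    move=> y y0; have : emb y != 0.
      by apply: contra y0 => /eqP h; rewrite -(emb_colk y) h; apply/eqP/matrixP => i j; rewrite !mxE.
    by move/hpd; rewrite -/(qf _ _ _) qf_emb.
- move=> [[_ hphi] hblk]; split => // x x0; rewrite -/(qf _ _ _) qf_decomp //.
  set s := \col_k csum (submxcol x k).
  have hsum : 0 <= \sum_k qf (submxcol x k) (Dk A k) (submxcol x k).
    by apply: sumr_ge0 => k _; apply: Dk_psd.
  have [s0|s0] := eqVneq s 0; last first.
    by have := hphi s s0; rewrite -/(qf _ _ _); lra.
  rewrite s0 qf0l addr0.
  have [k xk] : exists k, submxcol x k != 0.
    apply/existsP; move: x0; apply: contraR; rewrite negb_exists => /forallP h.
    apply/eqP/mxcolP => k; move: (h k); rewrite negbK => /eqP ->.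
    by apply/matrixP => i j; rewrite !mxE.
  have ck : csum (submxcol x k) = 0 by have := congr1 (fun m : 'cV[R]_p => m k 0) s0; rewrite /s !mxE.
  have hk : 0 < qf (submxcol x k) (Dk A k) (submxcol x k).
    by rewrite qf_Dk ck !mulr0 subr0; apply: (proj2 (hblk k)).
  rewrite (bigD1 k) //=.
  have : 0 <= \sum_(i < p | i != k) qf (submxcol x i) (Dk A i) (submxcol x i).
    by apply: sumr_ge0 => i _; apply: Dk_psd.
  lra.
Qed.
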